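(* Let $G=(V,E)$ be a connected undirected graph whose vertices are labelled by distinct integers, and orient each edge $\{u,v\}\in E$ from $u$ to $v$ if $v>u$ (and from $v$ to $u$ otherwise). Fix a vertex $k\in V$ and let $H=(V',E')$ be the undirected graph with vertex set $V'=\{s,t\}\cup\{v_b : v\in V,\ b\in\{0,1,2\}\}$ and edge set $$E'=\{(u_b,v_{(b+1)\bmod 3}) : (u,v)\text{ a directed edge of }G,\ b\in\{0,1,2\}\}\cup\{(s,k_0),(t,k_1)\}.$$ Then there is a path from $s$ to $t$ in $H$ if and only if $G$ contains a cycle such that the difference $D:=p-q$ between its number $p$ of clockwise edges and its number $q$ of anticlockwise edges satisfies $D\not\equiv 0 \pmod 3$. Furthermore, if $k$ is a vertex on such a cycle, then the path between $s$ and $t$ in $H$ can be taken to have length at most $2c+2$, where $c$ is the length of the cycle.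
   Context: Clockwise/anticlockwise edges of a cycle in the oriented graph $G$: choose a vertex $v$ of the cycle having at least one outgoing edge (with respect to the orientation above) that belongs to the cycle, and traverse the cycle from $v$ back to $v$ starting along such an outgoing edge. An edge of the cycle is clockwise if its orientation agrees with the direction of traversal and anticlockwise otherwise. (The condition $D\not\equiv 0 \pmod 3$ does not depend on the traversal direction.) *)

(* Defs.v *)
From mathcomp Require Import all_boot all_order all_algebra.
Set Implicit Arguments. Unset Strict Implicit. Unset Printing Implicit Defensive.
Import Order.TTheory GRing.Theory Num.Theory.

Section Defs.
Variables (T : finType) (e : rel T) (lab : T -> int).

Definition dedge (u v : T) : bool := e u v && (lab u < lab v)%R.

Definition is_cycle (c : seq T) : bool :=
  [&& 3 <= size c, uniq c & cycle e c].

(* D = (#clockwise edges) - (#anticlockwise edges) along the traversal c. *)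
Definition cycD (c : seq T) : int :=
  (\sum_(pr <- zip c (rot 1 c))
      (if (lab pr.1 < lab pr.2)%R then 1 else -1))%R.

(* Vertices of H: inl (v, b) is v_b, inr false is s, inr true is t. *)
Definition HV : finType := ((T * 'I_3) + bool)%type.
Definition Hs : HV := inr false.
Definition Ht : HV := inr true.

Definition hedge0 (k : T) (x y : HV) : bool :=
  match x, y with
  | inl (u, b), inl (v, b') => dedge u v && (nat_of_ord b' == (b.+1 %% 3))
  | inr false, inl (v, b) => (v == k) && (nat_of_ord b == 0)
  | inr true, inl (v, b) => (v == k) && (nat_of_ord b == 1)
  | _, _ => false
  end.

Definition hedge (k : T) : rel HV := fun x y => hedge0 k x y || hedge0 k y x.

Definition Hpath (k : T) (x y : HV) (p : seq HV) : bool :=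
  [&& path (hedge k) x p, uniq (x :: p) & last x p == y].
End Defs.

(* Main.v *)
Require Import Defs.
From mathcomp Require Import all_boot all_order all_algebra.
From mathcomp Require Import zify.
Import Order.TTheory GRing.Theory Num.Theory.

Section Proof.
Variables (T : finType) (e : rel T) (lab : T -> int) (k : T).
Hypotheses (esymm : symmetric e) (eirr : irreflexive e) (labi : injective lab).

Local Open Scope ring_scope.

Definition w (u v : T) : int := if lab u < lab v then 1 else -1.

Fixpoint pv (u : T) (q : seq T) : int :=
  match q with [::] => 0 | v :: q' => w u v + pv v q' end.

Lemma pv_cat u p q : pv u (p ++ q) = pv u p + pv (last u p) q.
Proof.
elim: p u => [|v p IH] u /=; first by rewrite add0r.
by rewrite IH addrA.
Qed.

Lemma sum_zip x q z :
  (\sum_(pr <- zip (x :: q) (rcons q z))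
      (if (lab pr.1 < lab pr.2) then 1 else -1)) = pv x (rcons q z).
Proof.
elim: q x => [|y q IH] x /=; first by rewrite big_cons big_nil.
by rewrite big_cons IH.
Qed.

Lemma cycD_pv x q : cycD lab (x :: q) = pv x (rcons q x).
Proof. by rewrite /cycD rot1_cons sum_zip. Qed.

Lemma wsym u v : u != v -> w u v + w v u = 0.
Proof.
move=> nuv; rewrite /w.
case: (ltgtP (lab u) (lab v)) => // h.
by move: nuv => /eqP []; apply: labi.
Qed.

Lemma notuniq_split (p : seq T) : ~~ uniq p ->
  exists p1 p2 p3 y, p = p1 ++ y :: (p2 ++ y :: p3).
Proof.
elim: p => [|y p IH] //=.
rewrite negb_and negbK; case: (boolP (y \in p)) => [yp _ | _ /= /IH].
  case/splitPr: yp => p2 p3. by exists [::], p2, p3, y.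
move=> [p1 [p2 [p3 [z ->]]]]. by exists (y :: p1), p2, p3, z.
Qed.

Lemma walk_cycle n : forall x p, (size p <= n)%N -> path e x p -> last x p = x ->
  ~~ (3 %| pv x p)%Z -> exists c, is_cycle e c /\ ~~ (3 %| cycD lab c)%Z.
Proof.
elim: n => [|n IH] x p.
  by case: p.
move=> Hs Hp Hl Hd.
case: (boolP (uniq p)) => Hu.
  case/lastP: p Hs Hp Hl Hd Hu => [|q y] //.
  rewrite last_rcons => Hs Hp Hy; subst y => Hd Hu.
  exists (x :: q); split; last by rewrite cycD_pv.
  move: Hu; rewrite rcons_uniq => /andP [xq uq].
  rewrite /is_cycle /= xq uq Hp andbT.
  case: q Hs Hp Hd xq uq => [|y [|z q]] //= _.
    by rewrite eirr.
  move=> _ Hd; rewrite inE => xy _.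
  by move: Hd; rewrite addr0 wsym.
have [p1 [p2 [p3 [y Ep]]]] := notuniq_split _ Hu.
subst p.
move: Hp; rewrite !cat_path /= !cat_path /= => /and5P [h1 h2 h3 h4 h5].
move: Hd; rewrite !pv_cat /= !pv_cat /= => Hd.
move: Hl; rewrite !last_cat /= !last_cat /= => Hl.
move: Hs; rewrite !size_cat /= !size_cat /= => Hs.
case: (boolP (3 %| pv x (p1 ++ y :: p3))%Z) => H1.
  apply: (IH y (rcons p2 y)).
  - by rewrite size_rcons; lia.
  - by rewrite rcons_path h3 h4.
  - by rewrite last_rcons.
  - move: H1 Hd; rewrite pv_cat /= -cats1 pv_cat /=; lia.
apply: (IH x (p1 ++ y :: p3)) => //.
- by rewrite size_cat /=; lia.
- by rewrite cat_path h1 /= h2 h5.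
- by rewrite last_cat.
Qed.

Definition stp (b : 'I_3) (u v : T) : 'I_3 :=
  inZp (b + (if (lab u < lab v)%R then 1 else 2))%N.

Fixpoint lift (b : 'I_3) (u : T) (q : seq T) : seq (HV T) :=
  match q with
  | [::] => [::]
  | v :: q' => inl (v, stp b u v) :: lift (stp b u v) v q'
  end.

Lemma lift_path b u q : path e u q -> path (hedge e lab k) (inl (u, b)) (lift b u q).
Proof.
elim: q u b => [|v q IH] u b //= /andP [euv pq].
rewrite IH // andbT /hedge /= /dedge /stp /=.
have nuv : u != v by apply: contraTneq euv => ->; rewrite eirr.
have nl : lab u != lab v by apply: contra nuv => /eqP /labi ->.
rewrite euv esymm euv /=.
case: (ltgtP (lab u) (lab v)) => h.
- by rewrite /= addn1 eqxx.
- rewrite /=; apply/eqP; have := ltn_ord b; lia.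
- by rewrite h eqxx in nl.
Qed.

Lemma lift_size b u q : size (lift b u q) = size q.
Proof. by elim: q u b => [|v q IH] u b //=; rewrite IH. Qed.

Lemma lift_last b u q : exists b' : 'I_3,
  last (inl (u, b)) (lift b u q) = inl (last u q, b') /\
  (3 %| (nat_of_ord b')%:Z - (nat_of_ord b)%:Z - pv u q)%Z.
Proof.
elim: q u b => [|v q IH] u b /=.
  by exists b; split => //; rewrite subrr.
have [b' [-> H]] := IH v (stp b u v).
exists b'; split => //.
move: H; rewrite /stp /w /=.
case: ifP => _ /=; lia.
Qed.

Lemma size_shorten (x : HV T) p : (size (shorten x p) <= size p)%N.
Proof.
elim: p x => [|y p IH] x //=.
case: ifP => _ /=; [apply: leq_trans (IH x) _ | ]; by rewrite ?ltnS ?IH.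
Qed.

Lemma walk_Hpath W : path e k W -> last k W = k -> (3 %| pv k W - 1)%Z ->
  exists p, Hpath e lab k (Hs T) (Ht T) p /\ (size p <= size W + 2)%N.
Proof.
move=> Hp Hl Hd.
set b0 : 'I_3 := Ordinal (isT : (0 < 3)%N).
set L := lift b0 k W.
set p0 := inl (k, b0) :: rcons L (Ht T).
have P0 : path (hedge e lab k) (Hs T) p0.
  rewrite /p0 /= rcons_path lift_path //=.
  have -> : hedge e lab k (Hs T) (inl (k, b0)) by rewrite /hedge /= eqxx.
  have [b' [-> Hb]] := lift_last b0 k W.
  rewrite Hl /hedge /= eqxx /=.
  by move: Hb Hd; have := ltn_ord b'; rewrite /=; lia.
have Ll : last (Hs T) p0 = Ht T by rewrite /p0 /= last_rcons.
have Sz := size_shorten (Hs T) p0.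
have Sz2 : (size p0 <= size W + 2)%N by rewrite /p0 /= size_rcons lift_size; lia.
move: Sz; rewrite -Ll; case: (shortenP P0) => p' P' U' _ Sz.
exists p'; split; first by rewrite /Hpath P' U' eqxx.
exact: leq_trans Sz Sz2.
Qed.

Lemma closed3 x p1 L p2 : path e k p1 -> last k p1 = x -> path e x L -> last x L = x ->
  path e x p2 -> last x p2 = k ->
  [/\ path e k (p1 ++ L ++ p2), last k (p1 ++ L ++ p2) = k &
      pv k (p1 ++ L ++ p2) = pv k p1 + pv x L + pv x p2].
Proof.
move=> h1 l1 h2 l2 h3 l3.
split.
- by rewrite !cat_path h1 l1 h2 l2 h3.
- by rewrite !last_cat l1 l2.
- by rewrite !pv_cat l1 l2 addrA.
Qed.

Lemma H_to_walk : forall (q : seq (HV T)) (a : T * 'I_3),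
  path (hedge e lab k) (inl a) q -> Hs T \notin q -> Ht T \in q ->
  exists qq, [/\ path e a.1 qq, last a.1 qq = k &
     (3 %| 1 - (nat_of_ord a.2)%:Z - pv a.1 qq)%Z].
Proof.
elim => [|y q IH] [u b] //=.
case: y => [[v b'] | [|]] /=.
- move=> /andP [h hp]; rewrite !inE negb_or => /andP [_ ns] /= ht.
  have [qq [P1 P2 P3]] := IH (v, b') hp ns ht.
  exists (v :: qq); split => //=.
    move: h; rewrite /hedge /= /dedge => /orP [/andP [/andP [-> _] _] //|].
    by move=> /andP [/andP [evu _] _]; rewrite esymm evu P1.
  move: P3; have := ltn_ord b; have := ltn_ord b'.
  move: h; rewrite /hedge /= /dedge /w.
  case/orP => /andP [/andP [_ hl] /eqP hb].
    rewrite hl; lia.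
  have -> : (lab u < lab v) = false by apply/negbTE; rewrite -leNgt ltW.
  lia.
- move=> /andP [h _]; move: h; rewrite /hedge /= => /andP [/eqP -> /eqP hb] _ _.
  by exists [::]; split => //=; rewrite hb /= subrr.
- by [].
Qed.

Lemma cycD_split c1 c2 : cycD lab (c1 ++ k :: c2) = pv k (rcons (c2 ++ c1) k).
Proof.
case: c1 => [|y c1] /=; first by rewrite cats0 cycD_pv.
rewrite cycD_pv -!cats1 -!catA /=.
rewrite !pv_cat /= ?pv_cat /= ?pv_cat /=.
lia.
Qed.

Hypothesis conn : forall x y : T, connect e x y.

Lemma part1 : (exists p : seq (HV T), Hpath e lab k (Hs T) (Ht T) p) <->
     (exists c : seq T, is_cycle e c /\ ~~ (3 %| cycD lab c)%Z).
Proof.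
split.
- move=> [p /and3P [Hp Hu /eqP Hl]].
  case: p Hp Hu Hl => [|y p] //= /andP [hy hp] Hu Hl.
  case: y hy hp Hu Hl => [[v b]|[|]] //; rewrite /hedge /= orbF.
  move=> /andP [/eqP ev /eqP eb] hp Hu Hl; subst v.
  move: Hu => /andP [ns _].
  move: ns; rewrite inE negb_or => /andP [_ ns].
  have ht : Ht T \in p.
    have := mem_last (inl (k, b)) p; rewrite Hl inE => /orP [] //.
  have [qq [P1 P2 P3]] := H_to_walk p (k, b) hp ns ht.
  apply: (walk_cycle (size qq) k qq (leqnn _) P1 P2).
  move: P3 => /=; rewrite eb; lia.
- move=> [[|x q] [Hc Hd]]; first by move: Hc; rewrite /is_cycle.
  move: Hc => /and3P [_ _ Hc]; move: Hc => /= HL.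
  move: Hd; rewrite cycD_pv => Hd.
  set L := rcons q x in HL Hd.
  have LL : last x L = x by rewrite last_rcons.
  have /connectP [p1 P1 L1] := conn k x.
  have /connectP [p2 P2 L2] := conn x k.
  have Hgo : forall M, path e x M -> last x M = x -> (3 %| pv k p1 + pv x M + pv x p2 - 1)%Z ->
     exists p : seq (HV T), Hpath e lab k (Hs T) (Ht T) p.
    move=> M PM LM HM.
    have [Q1 Q2 Q3] := closed3 _ _ _ _ P1 (Logic.eq_sym L1) PM LM P2 (Logic.eq_sym L2).
    have [p [Hp _]] := walk_Hpath _ Q1 Q2 ltac:(by rewrite Q3).
    by exists p.
  case: (boolP (3 %| pv k p1 + pv x [::] + pv x p2 - 1)%Z) => h0.
    by apply: (Hgo [::]).
  case: (boolP (3 %| pv k p1 + pv x L + pv x p2 - 1)%Z) => h1.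
    by apply: (Hgo L).
  apply: (Hgo (L ++ L)).
  - by rewrite cat_path HL LL HL.
  - by rewrite last_cat LL LL.
  - move: h0 h1 Hd; rewrite pv_cat LL /=; lia.
Qed.

Lemma part2 (c : seq T) : is_cycle e c -> ~~ (3 %| cycD lab c)%Z -> k \in c ->
     exists p : seq (HV T),
       Hpath e lab k (Hs T) (Ht T) p /\ (size p <= 2 * size c + 2)%N.
Proof.
move=> Hc Hd kc.
case/splitPr: kc Hc Hd => c1 c2 Hc Hd.
move: Hd; rewrite cycD_split => Hd.
move: Hc => /and3P [_ _ Hc].
have : cycle e (k :: c2 ++ c1).
  by rewrite -(rot_cycle (size c1)) rot_size_cat in Hc.
move=> /= HL.
set L := rcons (c2 ++ c1) k in HL Hd.
have LL : last k L = k by rewrite last_rcons.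
have SL : size L = size (c1 ++ k :: c2).
  by rewrite size_rcons !size_cat /= addnS addnC.
case: (boolP (3 %| pv k L - 1)%Z) => h1.
  have [p [Hp Sp]] := walk_Hpath _ HL LL h1.
  exists p; split => //; apply: leq_trans Sp _; rewrite SL size_cat /=; lia.
have [p [Hp Sp]] := walk_Hpath (L ++ L) ltac:(by rewrite cat_path HL LL HL)
   ltac:(by rewrite last_cat LL LL) ltac:(by move: h1 Hd; rewrite pv_cat LL; lia).
exists p; split => //; apply: leq_trans Sp _; rewrite /L !size_cat !size_rcons !size_cat /=; lia.
Qed.

End Proof.

Theorem lemma1 (T : finType) (e : rel T) (lab : T -> int) (k : T) :
  symmetric e -> irreflexive e -> injective lab ->
  (forall x y : T, connect e x y) ->
  ((exists p : seq (HV T), Hpath e lab k (Hs T) (Ht T) p) <->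
     (exists c : seq T, is_cycle e c /\ ~~ (3 %| cycD lab c)%Z))
  /\
  (forall c : seq T, is_cycle e c -> ~~ (3 %| cycD lab c)%Z -> k \in c ->
     exists p : seq (HV T),
       Hpath e lab k (Hs T) (Ht T) p /\ size p <= 2 * size c + 2).
Proof.
move=> esymm eirr labi conn; split.
- exact: part1.
- exact: part2.
Qed.
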